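(* Let $0<q<1$, $p=1-q$, $Q=1/q$, $L=\log Q$. The expected position of the last left-to-right maximum in a random word of length $n$ satisfies, as $n\to\infty$, \[ \mathbb E[P_n]=n\Big(\frac1L-\frac qp+\varpi(\log_Q n)\Big)+o(n), \] where $\varpi$ is a continuous periodic function of period $1$ (arising from the poles $z=1+2k\pi i/L$, $k\in\mathbb Z\setminus\{0\}$).
   Context: Words $a_1\dots a_n$ have independent letters with $\mathbb P\{a_i=k\}=pq^{k-1}$, $k\ge1$. An index $i$ is a left-to-right maximum if $a_i>a_j$ for all $j<i$. $P_n$ is the index of the last left-to-right maximum, i.e. of the first occurrence of $\max_j a_j$. *)

(* Defs.v *)
From Stdlib Require Import Reals Lra List Arith.
From Coquelicot Require Import Coquelicot.
Import ListNotations.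
Open Scope R_scope.

Fixpoint words (n M : nat) : list (list nat) :=
  match n with
  | O => [ [] ]
  | S n' => flat_map (fun a => map (cons a) (words n' M)) (seq 1 M)
  end.

Definition word_prob (p q : R) (w : list nat) : R :=
  fold_right (fun a acc => p * q ^ (a - 1) * acc) 1 w.

(* Scanning left to right: i = current (1-based) index, m = current running
   maximum, pos = index of the last left-to-right maximum seen so far.
   Index i is a left-to-right maximum iff a_i > a_j for all j < i,
   i.e. iff a_i > (running max of a_1..a_{i-1}) (with max of empty = 0,
   letters being >= 1). *)
Fixpoint last_lrmax_aux (w : list nat) (i m pos : nat) : nat :=
  match w with
  | [] => pos
  | a :: w' =>
      if Nat.ltb m a then last_lrmax_aux w' (S i) a i
      else last_lrmax_aux w' (S i) m pos
  end.

Definition last_lrmax (w : list nat) : nat := last_lrmax_aux w 1 0 0.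

Definition partial_EP (p q : R) (n M : nat) : R :=
  fold_right Rplus 0
    (map (fun w => word_prob p q w * INR (last_lrmax w)) (words n M)).

(* E[P_n] = sum over all words in {1,2,...}^n of P(w) P_n(w): a series of
   nonnegative terms, obtained as the (monotone) limit of the partial sums
   over letters bounded by M. *)
Definition EP (p q : R) (n : nat) : R :=
  real (Lim_seq (fun M => partial_EP p q n M)).

(* Main.v *)
Require Import Defs.
From Stdlib Require Import Reals Lra Lia List Arith.
From Coquelicot Require Import Coquelicot.
Import ListNotations.
Open Scope R_scope.

Definition Ssum (f : nat -> R) (l : list nat) : R := fold_right Rplus 0 (map f l).

Lemma Ssum_nil f : Ssum f [] = 0. Proof. reflexivity. Qed.
Lemma Ssum_cons f a l : Ssum f (a :: l) = f a + Ssum f l. Proof. reflexivity. Qed.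
Lemma Ssum_app f l1 l2 : Ssum f (l1 ++ l2) = Ssum f l1 + Ssum f l2.
Proof. induction l1; simpl app; [rewrite Ssum_nil; ring| rewrite !Ssum_cons, IHl1; ring]. Qed.
Lemma Ssum_ext_in f g l : (forall x, In x l -> f x = g x) -> Ssum f l = Ssum g l.
Proof. intros H; unfold Ssum; f_equal; apply map_ext_in; auto. Qed.
Lemma Ssum_ext f g l : (forall x, f x = g x) -> Ssum f l = Ssum g l.
Proof. intros H; apply Ssum_ext_in; auto. Qed.
Lemma Ssum_plus f g l : Ssum (fun x => f x + g x) l = Ssum f l + Ssum g l.
Proof. induction l; [simpl; unfold Ssum; simpl; ring|]. rewrite !Ssum_cons, IHl; ring. Qed.
Lemma Ssum_minus f g l : Ssum (fun x => f x - g x) l = Ssum f l - Ssum g l.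
Proof. induction l; [unfold Ssum; simpl; ring|]. rewrite !Ssum_cons, IHl; ring. Qed.
Lemma Ssum_scal c f l : Ssum (fun x => c * f x) l = c * Ssum f l.
Proof. induction l; [unfold Ssum; simpl; ring|]. rewrite !Ssum_cons, IHl; ring. Qed.
Lemma Ssum_zero l : Ssum (fun _ => 0) l = 0.
Proof. induction l; [reflexivity|]. rewrite Ssum_cons, IHl; ring. Qed.
Lemma Ssum_le f g l : (forall x, f x <= g x) -> Ssum f l <= Ssum g l.
Proof. intros H; induction l; [unfold Ssum; simpl; lra|]. rewrite !Ssum_cons; specialize (H a); lra. Qed.
Lemma Ssum_abs f l : Rabs (Ssum f l) <= Ssum (fun x => Rabs (f x)) l.
Proof. induction l; [unfold Ssum; simpl; rewrite Rabs_R0; lra|]. rewrite !Ssum_cons.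
  eapply Rle_trans; [apply Rabs_triang|lra]. Qed.
Lemma Ssum_nonneg f l : (forall x, 0 <= f x) -> 0 <= Ssum f l.
Proof. intros H; rewrite <- (Ssum_zero l); apply Ssum_le; auto. Qed.
Lemma Ssum_seq_S f s n : Ssum f (seq s (S n)) = Ssum f (seq s n) + f (s + n)%nat.
Proof. rewrite seq_S, Ssum_app. unfold Ssum at 2; simpl; ring. Qed.
Lemma Ssum_tele u s n : Ssum (fun k => u (S k) - u k) (seq s n) = u (s + n)%nat - u s.
Proof. induction n. { unfold Ssum; simpl; rewrite Nat.add_0_r; ring. }
  rewrite Ssum_seq_S, IHn, Nat.add_succ_r; ring. Qed.

Lemma sum_flat (g : list nat -> R) (W : list (list nat)) (l : list nat) :
  fold_right Rplus 0 (map g (flat_map (fun a => map (cons a) W) l)) =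
  Ssum (fun a => fold_right Rplus 0 (map (fun w => g (a :: w)) W)) l.
Proof.
  induction l; [reflexivity|]. cbn [flat_map]. rewrite map_app, fold_right_app.
  rewrite Ssum_cons, <- IHl. rewrite map_map.
  generalize (fold_right Rplus 0 (map g (flat_map (fun a0 => map (cons a0) W) l))).
  clear IHl. induction W; intros r; simpl; [ring|]. rewrite IHW. ring.
Qed.

Lemma fold_scal (c : R) (g : list nat -> R) (W : list (list nat)) :
  fold_right Rplus 0 (map (fun w => c * g w) W) = c * fold_right Rplus 0 (map g W).
Proof. induction W; simpl; [ring|]. rewrite IHW; ring. Qed.

Section Comb.
Variable q : R.
Variable M : nat.

Definition ww (k : nat) := (1 - q) * q ^ (k - 1).
Definition al (k : nat) := 1 - q ^ (k - 1).
Definition be (k : nat) := 1 - q ^ k.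

Fixpoint TT (n i k : nat) : R :=
  match n with
  | O => 0
  | S n' => INR i * ww k * be k ^ n' + al k * TT n' (S i) k
  end.

Definition GG (n i m pos : nat) : R :=
  fold_right Rplus 0
    (map (fun w => word_prob (1 - q) q w * INR (last_lrmax_aux w i m pos)) (words n M)).

Lemma Ssum_ww m : Ssum ww (seq 1 m) = 1 - q ^ m.
Proof. induction m. { unfold Ssum; simpl; ring. }
  rewrite Ssum_seq_S, IHm. unfold ww. replace (1 + m - 1)%nat with m by lia. simpl; ring. Qed.

Lemma key_id (f : nat -> R) len : forall m,
  (1 - q ^ m) * Ssum f (seq (S m) len) +
  Ssum (fun a => ww a * Ssum f (seq (S a) (m + len - a))) (seq (S m) len) =
  Ssum (fun k => al k * f k) (seq (S m) len).
Proof.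
  induction len; intros m. { unfold Ssum; simpl; ring. }
  simpl seq. rewrite !Ssum_cons.
  replace (m + S len - S m)%nat with len by lia.
  rewrite <- (IHlen (S m)).
  rewrite (Ssum_ext_in (fun a => ww a * Ssum f (seq (S a) (m + S len - a)))
                       (fun a => ww a * Ssum f (seq (S a) (S m + len - a)))).
  2:{ intros x _. f_equal. f_equal. f_equal. lia. }
  unfold ww, al. replace (S m - 1)%nat with m by lia. simpl. ring.
Qed.

Lemma GG_step n i m pos :
  GG (S n) i m pos = Ssum (fun a => ww a * GG n (S i) (if Nat.ltb m a then a else m)
                                               (if Nat.ltb m a then i else pos)) (seq 1 M).
Proof.
  unfold GG. simpl words. rewrite sum_flat. apply Ssum_ext. intros a.
  rewrite <- fold_scal. f_equal. apply map_ext. intros w.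
  simpl. unfold ww. destruct (Nat.ltb m a); ring.
Qed.

Lemma GG_closed n : forall i m pos, (m <= M)%nat ->
  GG n i m pos = INR pos * (1 - q ^ m) ^ n + Ssum (TT n i) (seq (S m) (M - m)).
Proof.
  induction n; intros i m pos Hm.
  { unfold GG. cbn [words map fold_right word_prob last_lrmax_aux].
    rewrite (Ssum_ext (TT 0 i) (fun _ => 0)) by reflexivity. rewrite Ssum_zero. simpl; ring. }
  rewrite GG_step.
  replace (seq 1 M) with (seq 1 m ++ seq (S m) (M - m)).
  2:{ rewrite <- seq_app. f_equal. lia. }
  rewrite Ssum_app.
  rewrite (Ssum_ext_in _ (fun a => ww a * GG n (S i) m pos) (seq 1 m)).
  2:{ intros x Hx. apply in_seq in Hx. replace (Nat.ltb m x) with false; [reflexivity|].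
      symmetry; apply Nat.ltb_ge; lia. }
  rewrite (Ssum_ext_in _ (fun a => ww a * (INR i * be a ^ n + Ssum (TT n (S i)) (seq (S a) (M - a))))
             (seq (S m) (M - m))).
  2:{ intros x Hx. apply in_seq in Hx. replace (Nat.ltb m x) with true by (symmetry; apply Nat.ltb_lt; lia).
      rewrite IHn by lia. unfold be. f_equal. }
  rewrite IHn by lia.
  rewrite (Ssum_ext (fun a => ww a * (INR pos * (1 - q ^ m) ^ n + Ssum (TT n (S i)) (seq (S m) (M - m))))
                    (fun a => (INR pos * (1 - q ^ m) ^ n + Ssum (TT n (S i)) (seq (S m) (M - m))) * ww a))
     by (intros; ring).
  rewrite Ssum_scal, Ssum_ww.
  rewrite (Ssum_ext (fun a => ww a * (INR i * be a ^ n + Ssum (TT n (S i)) (seq (S a) (M - a))))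
             (fun a => INR i * ww a * be a ^ n + ww a * Ssum (TT n (S i)) (seq (S a) (M - a)))) by (intros; ring).
  rewrite Ssum_plus. simpl TT. rewrite Ssum_plus.
  pose proof (key_id (TT n (S i)) (M - m) m) as K.
  replace (m + (M - m))%nat with M in K by lia.
  rewrite <- K. simpl pow. ring.
Qed.

End Comb.

Lemma exp_pow_INR n x : exp (INR n * x) = exp x ^ n.
Proof. induction n. { simpl. rewrite Rmult_0_l, exp_0; ring. }
  rewrite S_INR, Rmult_plus_distr_r, Rmult_1_l, exp_plus, IHn. simpl; ring. Qed.

Lemma expn_lb y : 1 - y <= exp (- y).
Proof. pose proof (exp_ineq1_le (- y)); lra. Qed.

Lemma expn_ub1 y : 0 <= y -> exp (- y) <= / (1 + y).
Proof. intros Hy. rewrite exp_Ropp. apply Rinv_le_contravar; [lra|]. apply exp_ineq1_le. Qed.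

Lemma expn_ub2 y : 0 <= y -> exp (- y) <= 1 - y + y ^ 2.
Proof. intros Hy. eapply Rle_trans; [apply expn_ub1; auto|].
  apply (Rmult_le_reg_l (1 + y)); [lra|]. rewrite Rinv_r by lra. nra. Qed.

Lemma expn_ub3 y : 0 < y -> exp (- y) <= / y.
Proof. intros Hy. eapply Rle_trans; [apply expn_ub1; lra|]. apply Rinv_le_contravar; lra. Qed.

Lemma exp_le x y : x <= y -> exp x <= exp y.
Proof. intros [H|H]; [left; apply exp_increasing; auto| subst; lra]. Qed.

Lemma pow_diff_le a b n : 0 <= b <= a -> 0 <= a ^ S n - b ^ S n <= INR (S n) * (a - b) * a ^ n.
Proof.
  intros [Hb Hab]. induction n.
  { simpl. lra. }
  assert (0 <= b ^ S n) by (apply pow_le; lra).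
  assert (b ^ S n <= a ^ S n) by (apply pow_incr; lra).
  assert (0 <= a ^ n) by (apply pow_le; lra).
  replace (a ^ S (S n) - b ^ S (S n)) with (a * (a ^ S n - b ^ S n) + b ^ S n * (a - b)) by (simpl; ring).
  rewrite S_INR. split.
  - apply Rplus_le_le_0_compat; apply Rmult_le_pos; lra.
  - destruct IHn as [_ IH].
    assert (a * (a ^ S n - b ^ S n) <= a * (INR (S n) * (a - b) * a ^ n)) by (apply Rmult_le_compat_l; lra).
    assert (b ^ S n * (a - b) <= a ^ S n * (a - b)) by (apply Rmult_le_compat_r; lra).
    replace ((INR (S n) + 1) * (a - b) * a ^ S n) with (a * (INR (S n) * (a - b) * a ^ n) + a ^ S n * (a - b)) by (simpl; ring).
    lra.
Qed.

Lemma powdiff y n : 0 <= y <= 1 ->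
  Rabs ((1 - y) ^ n - exp (- (INR n * y))) <= 3 * INR n * y ^ 2 * exp (- (INR n * y)).
Proof.
  intros Hy. destruct n.
  { simpl. rewrite Rmult_0_l, Ropp_0, exp_0. rewrite Rminus_diag, Rabs_R0. lra. }
  set (a := exp (- y)). set (b := 1 - y).
  assert (Hb : 0 <= b <= a) by (unfold a, b; split; [lra| apply expn_lb]).
  assert (Hab : a - b <= y ^ 2) by (unfold a, b; pose proof (expn_ub2 y); lra).
  assert (E : exp (- (INR (S n) * y)) = a ^ S n).
  { unfold a. rewrite <- exp_pow_INR. f_equal; ring. }
  rewrite E. fold b.
  pose proof (pow_diff_le a b n Hb) as [H1 H2].
  rewrite Rabs_minus_sym, Rabs_right by lra.
  assert (Ha : 0 < a) by apply exp_pos.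
  assert (a ^ n <= 3 * a ^ S n).
  { simpl. assert (1 <= 3 * a).
    { unfold a. rewrite exp_Ropp. apply (Rmult_le_reg_r (exp y)); [apply exp_pos|].
      rewrite Rmult_assoc, Rinv_l by (apply Rgt_not_eq, exp_pos).
      assert (exp y <= exp 1) by (apply exp_le; lra). pose proof exp_le_3; lra. }
    assert (0 <= a ^ n) by (apply pow_le; lra). nra. }
  assert (0 <= INR (S n)) by apply pos_INR.
  assert (0 <= a - b) by lra.
  assert (0 <= a ^ n) by (apply pow_le; lra).
  eapply Rle_trans; [exact H2|].
  apply Rle_trans with (INR (S n) * y ^ 2 * a ^ n).
  { apply Rmult_le_compat_r; auto. apply Rmult_le_compat_l; auto. }
  replace (3 * INR (S n) * y ^ 2 * a ^ S n) with (INR (S n) * y ^ 2 * (3 * a ^ S n)) by ring.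
  apply Rmult_le_compat_l; [|auto]. apply Rmult_le_pos; auto. apply pow_le; lra.
Qed.

Lemma pow_le1 x n : 0 <= x <= 1 -> x ^ n <= 1.
Proof. intros H. induction n; simpl; [lra|]. assert (0 <= x ^ n) by (apply pow_le; lra). nra. Qed.

Lemma abs4 a b c d : Rabs (a - b - c - d) <= Rabs a + Rabs b + Rabs c + Rabs d.
Proof. unfold Rabs; repeat destruct Rcase_abs; lra. Qed.

Section Main.
Variable q : R.
Hypothesis hq0 : 0 < q.
Hypothesis hq1 : q < 1.

Definition Q := 1 / q.
Definition cc := (1 - q) / q.
Definition hh (t : R) := (exp (- t) - exp (- (Q * t))) / (cc * t) - exp (- (Q * t)).
Definition D1 (t : R) := (exp (- t) - exp (- (Q * t))) / (cc * t).

Lemma Q_gt1 : 1 < Q.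
Proof. unfold Q. apply (Rmult_lt_reg_r q); auto. field_simplify; lra. Qed.
Lemma cc_pos : 0 < cc.
Proof. unfold cc. apply Rdiv_lt_0_compat; lra. Qed.
Lemma Q_cc : Q = 1 + cc.
Proof. unfold Q, cc. field. lra. Qed.
Lemma qQ : q * Q = 1.
Proof. unfold Q. field. lra. Qed.

Lemma exp_qt t : exp (- (q * t)) = exp (- t) * exp ((1 - q) * t).
Proof. rewrite <- exp_plus. f_equal; ring. Qed.
Lemma exp_Qt t : exp (- (Q * t)) = exp (- t) * exp (- (cc * t)).
Proof. rewrite <- exp_plus. f_equal. rewrite Q_cc; ring. Qed.

Lemma TE1 t : 0 <= t -> t * exp (- t) <= / (1 - q) * (exp (- (q * t)) - exp (- t)).
Proof.
  intros Ht. rewrite exp_qt. pose proof (exp_ineq1_le ((1 - q) * t)).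
  pose proof (exp_pos (- t)).
  apply (Rmult_le_reg_l (1 - q)); [lra|].
  replace ((1 - q) * (/ (1 - q) * (exp (- t) * exp ((1 - q) * t) - exp (- t))))
    with (exp (- t) * (exp ((1 - q) * t) - 1)) by (field; lra).
  assert (0 <= (1 - q) * t) by (apply Rmult_le_pos; lra). nra.
Qed.

Lemma TE2 t : 0 <= t -> t ^ 2 * exp (- t) <= 4 / (1 - q) ^ 2 * (exp (- (q * t)) - exp (- t)).
Proof.
  intros Ht. rewrite exp_qt.
  assert (E : exp ((1 - q) * t) = exp ((1 - q) * t / 2) ^ 2).
  { simpl. rewrite Rmult_1_r, <- exp_plus. f_equal; field. }
  pose proof (exp_ineq1_le ((1 - q) * t / 2)).
  assert (H2 : (1 + (1 - q) * t / 2) ^ 2 <= exp ((1 - q) * t)).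
  { rewrite E. apply pow_incr. split; [|auto]. assert (0 <= (1-q) * t) by (apply Rmult_le_pos; lra). lra. }
  pose proof (exp_pos (- t)).
  assert (0 < (1 - q) ^ 2) by (apply pow_lt; lra).
  apply (Rmult_le_reg_l ((1 - q) ^ 2)); [lra|].
  replace ((1 - q) ^ 2 * (4 / (1 - q) ^ 2 * (exp (- t) * exp ((1 - q) * t) - exp (- t))))
    with (4 * (exp (- t) * (exp ((1 - q) * t) - 1))) by (field; lra).
  assert ((1 - q) ^ 2 * t ^ 2 <= 4 * (exp ((1 - q) * t) - 1)).
  { assert (0 <= (1-q) * t) by (apply Rmult_le_pos; lra). nra. }
  nra.
Qed.

Lemma hh_bound t : 0 < t -> Rabs (hh t) <= / q * (exp (- (q * t)) - exp (- t)).
Proof.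
  intros Ht. pose proof cc_pos as Hc.
  set (y := cc * t). assert (Hy : 0 < y) by (unfold y; nra).
  set (e := exp (- y)).
  assert (He1 : e <= / (1 + y)) by (apply expn_ub1; lra).
  assert (He2 : 1 - y <= e) by apply expn_lb.
  assert (He0 : 0 < e) by apply exp_pos.
  assert (Hpsi0 : 0 <= (1 - e) / y - e).
  { assert (H : e * (1 + y) <= 1).
    { replace 1 with (/ (1 + y) * (1 + y)) at 2 by (field; lra). apply Rmult_le_compat_r; lra. }
    replace ((1 - e) / y - e) with ((1 - e * (1 + y)) * / y) by (field; lra).
    apply Rmult_le_pos; [lra|]. left; apply Rinv_0_lt_compat; lra. }
  assert (Hpsi1 : (1 - e) / y - e <= y).
  { replace ((1 - e) / y - e) with ((1 - e - y * e) * / y) by (field; lra).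
    apply (Rmult_le_reg_r y); auto. rewrite Rmult_assoc, Rinv_l, Rmult_1_r by lra. nra. }
  assert (Eh : hh t = exp (- t) * ((1 - e) / y - e)).
  { unfold hh, e, y. rewrite exp_Qt. field. split; lra. }
  rewrite Eh. pose proof (exp_pos (- t)).
  rewrite Rabs_right by (apply Rle_ge, Rmult_le_pos; lra).
  apply Rle_trans with (exp (- t) * y); [apply Rmult_le_compat_l; lra|].
  unfold y. replace (exp (- t) * (cc * t)) with (/ q * ((1 - q) * (t * exp (- t)))) by (unfold cc; field; lra).
  apply Rmult_le_compat_l; [left; apply Rinv_0_lt_compat; lra|].
  pose proof (TE1 t (Rlt_le _ _ Ht)).
  apply (Rmult_le_compat_l (1 - q)) in H0; [|lra].
  replace ((1 - q) * (/ (1 - q) * (exp (- (q * t)) - exp (- t)))) with (exp (- (q * t)) - exp (- t)) in H0 by (field; lra).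
  lra.
Qed.


Lemma ww_eq k : (1 <= k)%nat -> ww q k = be q k - al q k.
Proof. intros Hk. unfold ww, be, al. destruct k; [lia|]. replace (S k - 1)%nat with k by lia. simpl; ring. Qed.

Lemma TT_gen k : (1 <= k)%nat -> forall n i,
  TT q n i k * ww q k = (INR i - 1) * ww q k * (be q k ^ n - al q k ^ n)
     + be q k * (be q k ^ n - al q k ^ n) - INR n * al q k ^ n * ww q k.
Proof.
  intros Hk n. rewrite ww_eq by auto. induction n; intros i.
  { simpl. ring. }
  cbn [TT]. rewrite ww_eq by auto.
  replace ((INR i * (be q k - al q k) * be q k ^ n + al q k * TT q n (S i) k) * (be q k - al q k))
    with (INR i * (be q k - al q k) * be q k ^ n * (be q k - al q k) + al q k * (TT q n (S i) k * (be q k - al q k))) by ring.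
  rewrite IHn. rewrite !S_INR. simpl pow. ring.
Qed.

Lemma TT_nonneg n i k : (1 <= k)%nat -> 0 <= TT q n i k.
Proof.
  intros Hk. revert i; induction n; intros i; simpl; [lra|].
  assert (0 <= q ^ (k - 1) <= 1) by (split; [apply pow_le; lra| apply pow_le1; lra]).
  assert (0 <= q ^ k <= 1) by (split; [apply pow_le; lra| apply pow_le1; lra]).
  apply Rplus_le_le_0_compat; [|apply Rmult_le_pos; [unfold al; lra| apply IHn]].
  apply Rmult_le_pos; [apply Rmult_le_pos; [apply pos_INR| unfold ww; apply Rmult_le_pos; lra]|].
  apply pow_le; unfold be; lra.
Qed.

Definition Vt (n k : nat) := exp (- (INR n * q ^ k)) + exp (- (INR n * (Q * q ^ k))) + (1 - Q * q ^ k) ^ n.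

Definition K1 := 3 / (cc * (1 - q)) + 3 * Q / (cc * (1 - q)) + 12 / (1 - q) ^ 2 + / cc.

Lemma K1_pos : 0 < K1.
Proof. pose proof cc_pos. pose proof Q_gt1. unfold K1.
  assert (0 < cc * (1 - q)) by (apply Rmult_lt_0_compat; lra).
  assert (0 < (1 - q) ^ 2) by (apply pow_lt; lra).
  assert (0 < 3 / (cc * (1 - q))) by (apply Rdiv_lt_0_compat; lra).
  assert (0 < 3 * Q / (cc * (1 - q))) by (apply Rdiv_lt_0_compat; lra).
  assert (0 < 12 / (1 - q) ^ 2) by (apply Rdiv_lt_0_compat; lra).
  assert (0 < / cc) by (apply Rinv_0_lt_compat; lra). lra. Qed.

Lemma perk n k : (1 <= n)%nat -> (1 <= k)%nat ->
  Rabs (TT q n 1 k / INR n - hh (INR n * q ^ k)) <= K1 / INR n * (Vt n (S k) - Vt n k).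
Proof.
  intros Hn Hk. pose proof cc_pos as Hc. pose proof Q_gt1 as HQ.
  set (N := INR n). assert (HN : 1 <= N) by (unfold N; apply (le_INR 1); auto).
  set (x := q ^ k).
  assert (Hx : 0 < x) by (unfold x; apply pow_lt; lra).
  assert (HQx : Q * x = q ^ (k - 1)).
  { unfold x. destruct k; [lia|]. replace (S k - 1)%nat with k by lia. simpl.
    rewrite <- Rmult_assoc, (Rmult_comm Q), qQ; ring. }
  assert (HQx1 : Q * x <= 1) by (rewrite HQx; apply pow_le1; lra).
  assert (Hx1 : x <= 1) by (unfold x; apply pow_le1; lra).
  assert (Hal : al q k = 1 - Q * x) by (unfold al; rewrite HQx; auto).
  assert (Hbe : be q k = 1 - x) by reflexivity.
  assert (Hww : ww q k = cc * x).
  { rewrite ww_eq by auto. rewrite Hal, Hbe. rewrite Q_cc. ring. }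
  pose proof (TT_gen k Hk n 1) as HT. rewrite Hww, Hal, Hbe in HT. fold N in HT.
  set (t := N * x). assert (Ht : 0 < t) by (unfold t; nra).
  set (B := (1 - x) ^ n). set (A := (1 - Q * x) ^ n).
  set (E1 := exp (- t)). set (E2 := exp (- (Q * t))).
  fold B A in HT. change (INR 1) with 1 in HT.
  assert (ET : TT q n 1 k / N - hh t = (B - E1) / (cc * t) - (A - E2) / (cc * t) - (B - A) / (cc * N) - (A - E2)).
  { apply (Rmult_eq_reg_r (cc * x)); [|nra].
    unfold hh. fold E1 E2.
    replace ((TT q n 1 k / N - ((E1 - E2) / (cc * t) - E2)) * (cc * x))
      with (TT q n 1 k * (cc * x) / N - ((E1 - E2) / N - E2 * (cc * x))) by (unfold t; field_simplify; [reflexivity|lra..]).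
    rewrite HT. unfold t. field_simplify; [reflexivity|lra..]. }
  rewrite ET.
  set (d1 := exp (- (q * t)) - E1). set (d2 := E1 - E2). set (d3 := B - A).
  assert (HVt : Vt n (S k) - Vt n k = d1 + d2 + d3).
  { unfold Vt, d1, d2, d3, E1, E2, B, A, t. fold N. fold x.
    replace (q ^ S k) with (q * x) by reflexivity.
    replace (Q * (q * x)) with x by (rewrite <- Rmult_assoc, (Rmult_comm Q), qQ; ring).
    replace (N * (q * x)) with (q * (N * x)) by ring.
    replace (N * (Q * x)) with (Q * (N * x)) by ring. ring. }
  rewrite HVt.
  assert (HB1 : Rabs (B - E1) <= 3 * N * x ^ 2 * E1).
  { unfold B, E1, t. apply powdiff; lra. }
  assert (HA1 : Rabs (A - E2) <= 3 * N * (Q * x) ^ 2 * E2).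
  { unfold A, E2, t. replace (Q * (N * x)) with (N * (Q * x)) by ring. apply powdiff.
    split; [nra|lra]. }
  assert (HE1 : 0 < E1) by apply exp_pos. assert (HE2 : 0 < E2) by apply exp_pos.
  assert (Hd1 : 0 <= d1).
  { unfold d1, E1. assert (exp (- t) < exp (- (q * t))) by (apply exp_increasing; nra). lra. }
  assert (Hd2 : 0 <= d2).
  { unfold d2, E1, E2. assert (exp (- (Q * t)) < exp (- t)) by (apply exp_increasing; nra). lra. }
  assert (Hd3 : 0 <= d3).
  { unfold d3, B, A. assert ((1 - Q * x) ^ n <= (1 - x) ^ n) by (apply pow_incr; split; nra). lra. }
  pose proof (TE1 t (Rlt_le _ _ Ht)) as T1. fold E1 in T1. fold d1 in T1.
  pose proof (TE1 (Q * t) ltac:(nra)) as T2.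
  replace (q * (Q * t)) with t in T2 by (rewrite <- Rmult_assoc, qQ; ring). fold E1 E2 d2 in T2.
  pose proof (TE2 (Q * t) ltac:(nra)) as T3.
  replace (q * (Q * t)) with t in T3 by (rewrite <- Rmult_assoc, qQ; ring). fold E1 E2 d2 in T3.
  assert (b1 : Rabs ((B - E1) / (cc * t)) <= 3 / (cc * (1 - q)) / N * d1).
  { unfold Rdiv at 1. rewrite Rabs_mult, Rabs_inv, (Rabs_right (cc * t)) by nra.
    apply Rle_trans with (3 * N * x ^ 2 * E1 * / (cc * t)).
    { apply Rmult_le_compat_r; [left; apply Rinv_0_lt_compat; nra| auto]. }
    replace (3 * N * x ^ 2 * E1 * / (cc * t)) with (3 / cc / N * (t * E1)) by (unfold t; field; split; lra).
    replace (3 / (cc * (1 - q)) / N * d1) with (3 / cc / N * (/ (1 - q) * d1)) by (field; split; lra).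
    apply Rmult_le_compat_l; auto. repeat apply Rmult_le_pos; try lra; left; apply Rinv_0_lt_compat; lra. }
  assert (b2 : Rabs ((A - E2) / (cc * t)) <= 3 * Q / (cc * (1 - q)) / N * d2).
  { unfold Rdiv at 1. rewrite Rabs_mult, Rabs_inv, (Rabs_right (cc * t)) by nra.
    apply Rle_trans with (3 * N * (Q * x) ^ 2 * E2 * / (cc * t)).
    { apply Rmult_le_compat_r; [left; apply Rinv_0_lt_compat; nra| auto]. }
    replace (3 * N * (Q * x) ^ 2 * E2 * / (cc * t)) with (3 * Q / cc / N * (Q * t * E2)) by (unfold t; field; split; lra).
    replace (3 * Q / (cc * (1 - q)) / N * d2) with (3 * Q / cc / N * (/ (1 - q) * d2)) by (field; split; lra).
    apply Rmult_le_compat_l; auto. repeat apply Rmult_le_pos; try lra; left; apply Rinv_0_lt_compat; lra. }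
  assert (b3 : Rabs (A - E2) <= 12 / (1 - q) ^ 2 / N * d2).
  { eapply Rle_trans; [exact HA1|].
    replace (3 * N * (Q * x) ^ 2 * E2) with (3 / N * ((Q * t) ^ 2 * E2)) by (unfold t; field; lra).
    replace (12 / (1 - q) ^ 2 / N * d2) with (3 / N * (4 / (1 - q) ^ 2 * d2)) by (field; split; lra).
    apply Rmult_le_compat_l; auto. left; apply Rdiv_lt_0_compat; lra. }
  assert (b4 : Rabs ((B - A) / (cc * N)) <= / cc / N * d3).
  { fold d3. rewrite Rabs_right.
    - right. field. split; lra.
    - apply Rle_ge. unfold Rdiv. apply Rmult_le_pos; auto. left; apply Rinv_0_lt_compat; nra. }
  assert (tri : Rabs ((B - E1) / (cc * t) - (A - E2) / (cc * t) - (B - A) / (cc * N) - (A - E2)) <=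
     Rabs ((B - E1) / (cc * t)) + Rabs ((A - E2) / (cc * t)) + Rabs ((B - A) / (cc * N)) + Rabs (A - E2)).
  { apply abs4. }
  eapply Rle_trans; [exact tri|].
  assert (HK : K1 / N * (d1 + d2 + d3) =
     (3 / (cc * (1 - q)) / N * d1 + 3 * Q / (cc * (1 - q)) / N * d2 + 12 / (1 - q) ^ 2 / N * d2 + / cc / N * d3)
     + ((3 * Q / (cc * (1 - q)) + 12 / (1 - q) ^ 2 + / cc) / N * d1 + (3 / (cc * (1 - q)) + / cc) / N * d2
        + (3 / (cc * (1 - q)) + 3 * Q / (cc * (1 - q)) + 12 / (1 - q) ^ 2) / N * d3)).
  { unfold K1. field. split; lra. }
  rewrite HK.
  assert (0 <= (3 * Q / (cc * (1 - q)) + 12 / (1 - q) ^ 2 + / cc) / N * d1 + (3 / (cc * (1 - q)) + / cc) / N * d2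
        + (3 / (cc * (1 - q)) + 3 * Q / (cc * (1 - q)) + 12 / (1 - q) ^ 2) / N * d3).
  { assert (0 < cc * (1 - q)) by (apply Rmult_lt_0_compat; lra).
    assert (0 < (1 - q) ^ 2) by (apply pow_lt; lra).
    assert (0 < 3 / (cc * (1 - q))) by (apply Rdiv_lt_0_compat; lra).
    assert (0 < 3 * Q / (cc * (1 - q))) by (apply Rdiv_lt_0_compat; lra).
    assert (0 < 12 / (1 - q) ^ 2) by (apply Rdiv_lt_0_compat; lra).
    assert (0 < / cc) by (apply Rinv_0_lt_compat; lra).
    assert (0 < / N) by (apply Rinv_0_lt_compat; lra).
    unfold Rdiv at 2 4 6.
    repeat apply Rplus_le_le_0_compat; repeat apply Rmult_le_pos; lra. }
  lra.
Qed.

End Main.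

Lemma is_lim_seq_Rle (u v : nat -> R) (l1 l2 : R) :
  (forall n, u n <= v n) -> is_lim_seq u l1 -> is_lim_seq v l2 -> l1 <= l2.
Proof. intros H H1 H2. pose proof (is_lim_seq_le u v l1 l2 H H1 H2). simpl in H0. auto. Qed.

Lemma Ssum_seq0_add a N m : Ssum a (seq 0 (N + m)) = Ssum a (seq 0 N) + Ssum a (seq N m).
Proof. rewrite seq_app, Ssum_app. reflexivity. Qed.

Lemma tail_conv (a w : nat -> R) (l : R) :
  (forall j, Rabs (a j) <= w j - w (S j)) -> is_lim_seq w l ->
  exists s : R, is_lim_seq (fun N => Ssum a (seq 0 N)) s /\
            forall N, Rabs (s - Ssum a (seq 0 N)) <= w N - l.
Proof.
  intros Ha Hw.
  assert (Hdec : forall j, w (S j) <= w j).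
  { intros j. specialize (Ha j). pose proof (Rabs_pos (a j)). lra. }
  assert (Hl : forall j, l <= w j) by (apply is_lim_seq_decr_compare; auto).
  assert (Htel : forall s m, Ssum (fun j => w j - w (S j)) (seq s m) = w s - w (s + m)%nat).
  { intros s m. rewrite (Ssum_ext _ (fun j => -1 * (w (S j) - w j))) by (intros; ring).
    rewrite Ssum_scal, Ssum_tele. ring. }
  set (b := fun j => (w j - w (S j)) - a j).
  assert (Hb : forall j, 0 <= b j).
  { intros j. unfold b. specialize (Ha j). pose proof (Rle_abs (a j)). lra. }
  assert (HB : ex_finite_lim_seq (fun N => Ssum b (seq 0 N))).
  { apply ex_finite_lim_seq_incr with (2 * (w 0%nat - l)).
    - intros N. rewrite Ssum_seq_S. specialize (Hb (0 + N)%nat). lra.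
    - intros N. apply Rle_trans with (Ssum (fun j => 2 * (w j - w (S j))) (seq 0 N)).
      + apply Ssum_le. intros j. unfold b. specialize (Ha j). pose proof (Rle_abs (- a j)).
        rewrite Rabs_Ropp in H. lra.
      + rewrite Ssum_scal, Htel. specialize (Hl (0 + N)%nat). lra. }
  apply Lim_seq_correct' in HB.
  set (sB := real (Lim_seq (fun N => Ssum b (seq 0 N)))) in *.
  assert (HB' : is_lim_seq (fun N => Ssum b (seq 0 N)) sB).
  { unfold sB. destruct (Lim_seq (fun N => Ssum b (seq 0 N))) eqn:E; simpl; auto;
    rewrite E in HB; exact HB. }
  assert (HW : is_lim_seq (fun N => Ssum (fun j => w j - w (S j)) (seq 0 N)) (w 0%nat - l)).
  { apply is_lim_seq_ext with (fun N => w 0%nat - w N).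
    - intros N. rewrite Htel. reflexivity.
    - apply is_lim_seq_minus'; [apply is_lim_seq_const| auto]. }
  exists (w 0%nat - l - sB). split.
  - apply is_lim_seq_ext with (fun N => Ssum (fun j => w j - w (S j)) (seq 0 N) - Ssum b (seq 0 N)).
    + intros N. rewrite <- Ssum_minus. apply Ssum_ext. intros j; unfold b; ring.
    + apply is_lim_seq_minus'; auto.
  - intros N.
    assert (Hlim : is_lim_seq (fun m => Ssum a (seq 0 (N + m))) (w 0%nat - l - sB)).
    { assert (Hm : is_lim_seq (fun m => Ssum a (seq 0 m)) (w 0%nat - l - sB)).
      { apply is_lim_seq_ext with (fun m => Ssum (fun j => w j - w (S j)) (seq 0 m) - Ssum b (seq 0 m)).
        - intros m. rewrite <- Ssum_minus. apply Ssum_ext. intros j; unfold b; ring.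
        - apply is_lim_seq_minus'; auto. }
      apply (is_lim_seq_incr_n _ N) in Hm.
      apply is_lim_seq_ext with (fun n => Ssum a (seq 0 (n + N))); [intros; f_equal; f_equal; lia| auto]. }
    apply (is_lim_seq_Rle (fun m => Rabs (Ssum a (seq 0 (N + m)) - Ssum a (seq 0 N)))
                          (fun m => w N - w (N + m)%nat)).
    + intros m. rewrite Ssum_seq0_add.
      replace (Ssum a (seq 0 N) + Ssum a (seq N m) - Ssum a (seq 0 N)) with (Ssum a (seq N m)) by ring.
      eapply Rle_trans; [apply Ssum_abs|]. rewrite <- Htel. apply Ssum_le. auto.
    + apply (is_lim_seq_abs (fun m => Ssum a (seq 0 (N + m)) - Ssum a (seq 0 N)) (w 0%nat - l - sB - Ssum a (seq 0 N))).
      apply is_lim_seq_minus'; [auto| apply is_lim_seq_const].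
    + apply is_lim_seq_minus'; [apply is_lim_seq_const|].
      apply (is_lim_seq_incr_n w N l) in Hw.
      apply is_lim_seq_ext with (fun n => w (n + N)%nat); [intros; f_equal; lia| auto].
Qed.

Section S5.
Variable q : R.
Hypothesis hq0 : 0 < q.
Hypothesis hq1 : q < 1.

Lemma Qpow j : Q q ^ j = / q ^ j.
Proof. unfold Q. rewrite <- pow_inv. f_equal. field. lra. Qed.

Lemma Qpow_pos j : 0 < Q q ^ j.
Proof. apply pow_lt. pose proof (Q_gt1 q hq0 hq1). lra. Qed.

Lemma lim_geom_scal x : is_lim_seq (fun j => x * q ^ j) 0.
Proof. replace 0 with (x * 0) by ring. apply is_lim_seq_mult'; [apply is_lim_seq_const|].
  apply is_lim_seq_geom. rewrite Rabs_right; lra. Qed.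

Lemma lim_expQ x : 0 < x -> is_lim_seq (fun j => exp (- (x * Q q ^ j))) 0.
Proof.
  intros Hx. apply is_lim_seq_le_le with (fun _ => 0) (fun j => / x * q ^ j).
  - intros j. split; [left; apply exp_pos|].
    eapply Rle_trans; [apply expn_ub3; apply Rmult_lt_0_compat; auto; apply Qpow_pos|].
    right. rewrite Qpow. field; repeat split; try lra; apply pow_nonzero; lra.
  - apply is_lim_seq_const.
  - apply lim_geom_scal.
Qed.

Lemma lim_expq x : 0 <= x -> is_lim_seq (fun j => exp (- (x * q ^ j))) 1.
Proof.
  intros Hx. apply is_lim_seq_le_le with (fun j => 1 - x * q ^ j) (fun _ => 1).
  - intros j. split; [apply expn_lb|]. rewrite <- exp_0. apply exp_le.
    assert (0 <= q ^ j) by (apply pow_le; lra). nra.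
  - replace (Finite 1) with (Finite (1 - 0)) by (f_equal; ring).
    apply is_lim_seq_minus'; [apply is_lim_seq_const| apply lim_geom_scal].
  - apply is_lim_seq_const.
Qed.

Definition aF x j := hh q (x * q ^ j) + hh q (x * Q q ^ (S j)).
Definition wF x j := / q * (exp (- (x * Q q ^ j)) - exp (- (x * q ^ j))).
Definition FF x := real (Lim_seq (fun N => Ssum (aF x) (seq 0 N))).

Lemma aF_bound x j : 0 < x -> Rabs (aF x j) <= wF x j - wF x (S j).
Proof.
  intros Hx. unfold aF, wF.
  assert (H1 := hh_bound q hq0 hq1 (x * q ^ j) ltac:(apply Rmult_lt_0_compat; auto; apply pow_lt; lra)).
  assert (H2 := hh_bound q hq0 hq1 (x * Q q ^ S j) ltac:(apply Rmult_lt_0_compat; auto; apply Qpow_pos)).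
  replace (q * (x * q ^ j)) with (x * q ^ S j) in H1 by (simpl; ring).
  replace (q * (x * Q q ^ S j)) with (x * Q q ^ j) in H2.
  2:{ transitivity (x * Q q ^ j * (q * Q q)); [rewrite (qQ q hq0); ring| simpl; ring]. }
  eapply Rle_trans; [apply Rabs_triang|]. lra.
Qed.

Lemma wF_lim x : 0 < x -> is_lim_seq (wF x) (- / q).
Proof.
  intros Hx. unfold wF. replace (- / q) with (/ q * (0 - 1)) by ring.
  apply is_lim_seq_mult'; [apply is_lim_seq_const|].
  apply is_lim_seq_minus'; [apply lim_expQ; auto| apply lim_expq; lra].
Qed.

Lemma FF_spec x : 0 < x ->
  is_lim_seq (fun N => Ssum (aF x) (seq 0 N)) (FF x) /\
  forall N, Rabs (FF x - Ssum (aF x) (seq 0 N)) <= / q * (q ^ N / x + x * q ^ N).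
Proof.
  intros Hx. destruct (tail_conv (aF x) (wF x) (- / q) (fun j => aF_bound x j Hx) (wF_lim x Hx))
    as [s [Hs Hb]].
  assert (E : FF x = s) by (unfold FF; rewrite (is_lim_seq_unique _ _ Hs); reflexivity).
  rewrite E. split; auto. intros N. eapply Rle_trans; [apply Hb|].
  unfold wF.
  assert (e1 : exp (- (x * Q q ^ N)) <= q ^ N / x).
  { eapply Rle_trans; [apply expn_ub3; apply Rmult_lt_0_compat; auto; apply Qpow_pos|].
    right. rewrite Qpow. field; repeat split; try lra; apply pow_nonzero; lra. }
  assert (e2 : 1 - x * q ^ N <= exp (- (x * q ^ N))) by apply expn_lb.
  assert (0 < / q) by (apply Rinv_0_lt_compat; lra).
  replace (/ q * (exp (- (x * Q q ^ N)) - exp (- (x * q ^ N))) - - / q)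
    with (/ q * (exp (- (x * Q q ^ N)) + (1 - exp (- (x * q ^ N))))) by ring.
  apply Rmult_le_compat_l; lra.
Qed.


Lemma Ssum_le_in f g l : (forall x, In x l -> f x <= g x) -> Ssum f l <= Ssum g l.
Proof. intros H; induction l; [unfold Ssum; simpl; lra|]. rewrite !Ssum_cons.
  assert (f a <= g a) by (apply H; left; auto). assert (Ssum f l <= Ssum g l) by (apply IHl; intros; apply H; right; auto). lra. Qed.

Lemma partial_EP_eq n M : partial_EP (1 - q) q n M = Ssum (TT q n 1) (seq 1 M).
Proof.
  change (partial_EP (1 - q) q n M) with (GG q M n 1 0 0).
  rewrite GG_closed by lia. rewrite Nat.sub_0_r. simpl INR. ring.
Qed.

Lemma Vt_bounds n k : (1 <= k)%nat -> 0 <= Vt q n k <= 3.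
Proof.
  intros Hk. unfold Vt.
  assert (HQ : Q q * q ^ k = q ^ (k - 1)).
  { destruct k; [lia|]. replace (S k - 1)%nat with k by lia. simpl.
    rewrite <- Rmult_assoc, (Rmult_comm (Q q)), (qQ q hq0); ring. }
  rewrite HQ.
  assert (0 <= q ^ k) by (apply pow_le; lra).
  assert (0 <= q ^ (k - 1) <= 1) by (split; [apply pow_le; lra| apply pow_le1; lra]).
  assert (0 <= INR n) by apply pos_INR.
  assert (exp (- (INR n * q ^ k)) <= 1) by (rewrite <- exp_0; apply exp_le; nra).
  assert (exp (- (INR n * q ^ (k - 1))) <= 1) by (rewrite <- exp_0; apply exp_le; nra).
  assert (0 <= (1 - q ^ (k - 1)) ^ n <= 1) by (split; [apply pow_le; lra| apply pow_le1; lra]).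
  pose proof (exp_pos (- (INR n * q ^ k))). pose proof (exp_pos (- (INR n * q ^ (k - 1)))).
  lra.
Qed.

Lemma sum_err n M : (1 <= n)%nat ->
  Rabs (Ssum (fun k => TT q n 1 k / INR n - hh q (INR n * q ^ k)) (seq 1 M)) <= 3 * K1 q / INR n.
Proof.
  intros Hn. eapply Rle_trans; [apply Ssum_abs|].
  eapply Rle_trans.
  { apply Ssum_le_in with (g := fun k => K1 q / INR n * (Vt q n (S k) - Vt q n k)).
    intros k Hk. apply in_seq in Hk. apply perk; auto; lia. }
  rewrite Ssum_scal, Ssum_tele.
  assert (0 < K1 q / INR n).
  { apply Rdiv_lt_0_compat; [apply K1_pos; auto| apply (lt_INR 0); lia]. }
  pose proof (Vt_bounds n (1 + M) ltac:(lia)). pose proof (Vt_bounds n 1 ltac:(lia)).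
  replace (3 * K1 q / INR n) with (K1 q / INR n * 3) by (field; apply not_0_INR; lia).
  apply Rmult_le_compat_l; lra.
Qed.

Lemma bracket n M : (1 <= n)%nat ->
  Rabs (hh q (INR n * q ^ 0)) + Ssum (fun j => Rabs (hh q (INR n * Q q ^ S j))) (seq 0 M)
   <= / q * exp (- (q * INR n)).
Proof.
  intros Hn. set (N := INR n). assert (HN : 1 <= N) by (unfold N; apply (le_INR 1); auto).
  assert (H0 := hh_bound q hq0 hq1 (N * q ^ 0) ltac:(simpl; lra)).
  replace (N * q ^ 0) with N in * by (simpl; ring).
  assert (Hs : Ssum (fun j => Rabs (hh q (N * Q q ^ S j))) (seq 0 M) <=
               Ssum (fun j => / q * (exp (- (N * Q q ^ j)) - exp (- (N * Q q ^ S j)))) (seq 0 M)).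
  { apply Ssum_le. intros j.
    assert (H := hh_bound q hq0 hq1 (N * Q q ^ S j) ltac:(apply Rmult_lt_0_compat; [lra| apply Qpow_pos])).
    replace (q * (N * Q q ^ S j)) with (N * Q q ^ j) in H; auto.
    transitivity (N * Q q ^ j * (q * Q q)); [rewrite (qQ q hq0); ring| simpl; ring]. }
  rewrite (Ssum_ext (fun j => / q * (exp (- (N * Q q ^ j)) - exp (- (N * Q q ^ S j))))
      (fun j => (- / q) * (exp (- (N * Q q ^ S j)) - exp (- (N * Q q ^ j))))) in Hs by (intros; ring).
  rewrite Ssum_scal, (Ssum_tele (fun j => exp (- (N * Q q ^ j)))) in Hs.
  rewrite pow_O, Rmult_1_r, Nat.add_0_l in Hs.
  pose proof (exp_pos (- (N * Q q ^ M))).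
  assert (0 < / q) by (apply Rinv_0_lt_compat; lra).
  assert (/ q * exp (- (N * Q q ^ M)) > 0) by (apply Rmult_lt_0_compat; lra).
  lra.
Qed.


Lemma hsum_bound n M : (1 <= n)%nat ->
  Ssum (fun k => Rabs (hh q (INR n * q ^ k))) (seq 1 M) <= / q.
Proof.
  intros Hn. set (N := INR n). assert (HN : 1 <= N) by (unfold N; apply (le_INR 1); auto).
  eapply Rle_trans.
  { apply Ssum_le with (g := fun k => / q * (exp (- (N * q ^ S k)) - exp (- (N * q ^ k)))).
    intros k. assert (H := hh_bound q hq0 hq1 (N * q ^ k) ltac:(apply Rmult_lt_0_compat; [lra| apply pow_lt; lra])).
    replace (q * (N * q ^ k)) with (N * q ^ S k) in H by (simpl; ring). auto. }
  rewrite Ssum_scal, (Ssum_tele (fun k => exp (- (N * q ^ k)))).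
  assert (0 < / q) by (apply Rinv_0_lt_compat; lra).
  assert (exp (- (N * q ^ (1 + M))) <= 1).
  { rewrite <- exp_0. apply exp_le. assert (0 <= q ^ (1 + M)) by (apply pow_le; lra). nra. }
  pose proof (exp_pos (- (N * q ^ 1))).
  assert (/ q * (exp (- (N * q ^ (1 + M))) - exp (- (N * q ^ 1))) <= / q * 1) by (apply Rmult_le_compat_l; lra).
  lra.
Qed.

Lemma EP_bound n : (1 <= n)%nat ->
  Rabs (EP (1 - q) q n / INR n - FF (INR n)) <= 3 * K1 q / INR n + / q * exp (- (q * INR n)).
Proof.
  intros Hn. set (N := INR n). assert (HN : 1 <= N) by (unfold N; apply (le_INR 1); auto).
  set (A := fun M => Ssum (TT q n 1) (seq 1 M)).
  assert (HAN : forall M, A M / N = Ssum (fun k => TT q n 1 k / N - hh q (N * q ^ k)) (seq 1 M)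
                                   + Ssum (fun k => hh q (N * q ^ k)) (seq 1 M)).
  { intros M. rewrite <- Ssum_plus. unfold A. unfold Rdiv. rewrite Rmult_comm, <- Ssum_scal.
    apply Ssum_ext. intros; ring. }
  assert (HAex : ex_finite_lim_seq A).
  { apply ex_finite_lim_seq_incr with (N * (3 * K1 q / N + / q)).
    - intros M. unfold A. rewrite Ssum_seq_S. pose proof (TT_nonneg q hq0 hq1 n 1 (1 + M) ltac:(lia)). lra.
    - intros M. replace (A M) with (N * (A M / N)) by (field; lra).
      apply Rmult_le_compat_l; [lra|]. rewrite HAN.
      pose proof (sum_err n M Hn) as E1. fold N in E1.
      pose proof (hsum_bound n M Hn) as E2. fold N in E2.
      pose proof (Ssum_abs (fun k => hh q (N * q ^ k)) (seq 1 M)).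
      pose proof (Rle_abs (Ssum (fun k => TT q n 1 k / N - hh q (N * q ^ k)) (seq 1 M))).
      pose proof (Rle_abs (Ssum (fun k => hh q (N * q ^ k)) (seq 1 M))). lra. }
  destruct HAex as [l Hl].
  assert (HEP : EP (1 - q) q n = l).
  { unfold EP. rewrite (Lim_seq_ext _ A) by (intros M; apply partial_EP_eq).
    rewrite (is_lim_seq_unique _ _ Hl). reflexivity. }
  rewrite HEP.
  assert (HN0 : 0 < N) by lra.
  destruct (FF_spec N HN0) as [HF _].
  apply (is_lim_seq_incr_1 _ (FF N)) in HF.
  apply (is_lim_seq_Rle (fun M => Rabs (A M / N - Ssum (aF N) (seq 0 (S M))))
                        (fun _ => 3 * K1 q / N + / q * exp (- (q * N)))).
  - intros M. rewrite HAN.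
    assert (HaF : Ssum (aF N) (seq 0 (S M)) = hh q (N * q ^ 0) + Ssum (fun k => hh q (N * q ^ k)) (seq 1 M)
                      + Ssum (fun j => hh q (N * Q q ^ S j)) (seq 0 (S M))).
    { unfold aF. rewrite Ssum_plus. reflexivity. }
    rewrite HaF.
    pose proof (sum_err n M Hn) as E1. fold N in E1.
    pose proof (bracket n (S M) Hn) as E2. fold N in E2.
    pose proof (Ssum_abs (fun j => hh q (N * Q q ^ S j)) (seq 0 (S M))).
    set (X := Ssum (fun k => TT q n 1 k / N - hh q (N * q ^ k)) (seq 1 M)) in *.
    set (Y := Ssum (fun j => hh q (N * Q q ^ S j)) (seq 0 (S M))) in *.
    replace (X + Ssum (fun k => hh q (N * q ^ k)) (seq 1 M) -
             (hh q (N * q ^ 0) + Ssum (fun k => hh q (N * q ^ k)) (seq 1 M) + Y))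
      with (X - hh q (N * q ^ 0) - Y) by ring.
    unfold Rminus. eapply Rle_trans; [apply Rabs_triang|]. rewrite Rabs_Ropp.
    eapply Rle_trans; [apply Rplus_le_compat_r; apply Rabs_triang|]. rewrite Rabs_Ropp. lra.
  - apply is_lim_seq_abs with (l := Finite (l / N - FF N)).
    apply is_lim_seq_minus'; auto.
    apply is_lim_seq_scal_r with (a := / N) (lu := Finite l) in Hl. simpl in Hl. exact Hl.
  - apply is_lim_seq_const.
Qed.

End S5.

Lemma ballR x e y : ball x e y <-> Rabs (y - x) < e.
Proof. split; intros H; exact H. Qed.

Lemma lim_by_bound (u v : nat -> R) (l : R) :
  (forall n, Rabs (u n - l) <= v n) -> is_lim_seq v 0 -> is_lim_seq u l.
Proof.
  intros H Hv. apply is_lim_seq_le_le with (fun n => l - v n) (fun n => l + v n).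
  - intros n. specialize (H n). apply Rabs_le_between' in H. lra.
  - replace (Finite l) with (Finite (l - 0)) by (f_equal; ring). apply is_lim_seq_minus'; auto. apply is_lim_seq_const.
  - replace (Finite l) with (Finite (l + 0)) by (f_equal; ring). apply is_lim_seq_plus'; auto. apply is_lim_seq_const.
Qed.

Lemma ex_derive_Ssum (f : nat -> R -> R) l x :
  (forall j, ex_derive (f j) x) -> ex_derive (fun y => Ssum (fun j => f j y) l) x.
Proof.
  intros H. induction l.
  - apply (ex_derive_ext (fun _ => 0)); [reflexivity| apply ex_derive_const].
  - apply (ex_derive_plus (f a) (fun y => Ssum (fun j => f j y) l)); auto.
Qed.

Lemma is_derive_Ssum (f df : nat -> R -> R) l x :
  (forall j, is_derive (f j) x (df j x)) -> is_derive (fun y => Ssum (fun j => f j y) l) x (Ssum (fun j => df j x) l).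
Proof.
  intros H. induction l.
  - rewrite Ssum_nil. apply (is_derive_ext (fun _ => 0)); [reflexivity|]. exact (is_derive_const (K := R_AbsRing) (0:R) x).
  - apply (is_derive_plus (f a) (fun y => Ssum (fun j => f j y) l)); auto.
Qed.

Section S6.
Variable q : R.
Hypothesis hq0 : 0 < q.
Hypothesis hq1 : q < 1.

Lemma hh_small t : 0 < t -> Rabs (hh q t) <= t / q.
Proof.
  intros Ht. eapply Rle_trans; [apply hh_bound; auto|].
  assert (exp (- (q * t)) <= 1) by (rewrite <- exp_0; apply exp_le; nra).
  pose proof (expn_lb t).
  assert (0 < / q) by (apply Rinv_0_lt_compat; lra).
  unfold Rdiv. rewrite Rmult_comm. apply Rmult_le_compat_r; lra.
Qed.

Lemma hh_large t : 0 < t -> Rabs (hh q t) <= / (q * q * t).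
Proof.
  intros Ht. eapply Rle_trans; [apply hh_bound; auto|].
  pose proof (expn_ub3 (q * t) ltac:(nra)). pose proof (exp_pos (- t)).
  assert (0 < / q) by (apply Rinv_0_lt_compat; lra).
  replace (/ (q * q * t)) with (/ q * / (q * t)) by (field; lra).
  apply Rmult_le_compat_l; lra.
Qed.

Lemma FF_period_partial x N :
  Ssum (aF q (Q q * x)) (seq 0 (S N)) - Ssum (aF q x) (seq 0 (S N)) =
  hh q (x * Q q ^ S (S N)) - hh q (x * q ^ N).
Proof.
  pose proof (qQ q hq0) as HqQ.
  induction N.
  - unfold Ssum, aF. simpl.
    replace (Q q * x * 1) with (x * (Q q * 1)) by ring.
    replace (Q q * x * (Q q * 1)) with (x * (Q q * (Q q * 1))) by ring.
    replace (x * 1) with x by ring. ring.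
  - rewrite (Ssum_seq_S (aF q (Q q * x))), (Ssum_seq_S (aF q x)).
    replace (Ssum (aF q (Q q * x)) (seq 0 (S N)) + aF q (Q q * x) (0 + S N) -
             (Ssum (aF q x) (seq 0 (S N)) + aF q x (0 + S N)))
      with ((Ssum (aF q (Q q * x)) (seq 0 (S N)) - Ssum (aF q x) (seq 0 (S N)))
            + aF q (Q q * x) (0 + S N) - aF q x (0 + S N)) by ring.
    rewrite IHN. unfold aF. rewrite Nat.add_0_l.
    replace (Q q * x * q ^ S N) with (x * q ^ N).
    2:{ simpl. transitivity (x * q ^ N * (q * Q q)); [rewrite HqQ; ring| ring]. }
    replace (Q q * x * Q q ^ S (S N)) with (x * Q q ^ S (S (S N))) by (simpl; ring).
    ring.
Qed.

Lemma FF_period x : 0 < x -> FF q (Q q * x) = FF q x.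
Proof.
  intros Hx. pose proof (Q_gt1 q hq0 hq1) as HQ.
  destruct (FF_spec q hq0 hq1 x Hx) as [H1 _].
  destruct (FF_spec q hq0 hq1 (Q q * x) ltac:(nra)) as [H2 _].
  apply (is_lim_seq_incr_1 _ (FF q x)) in H1.
  apply (is_lim_seq_incr_1 _ (FF q (Q q * x))) in H2.
  assert (H3 : is_lim_seq (fun N => hh q (x * Q q ^ S (S N)) - hh q (x * q ^ N)) 0).
  { apply lim_by_bound with (fun N => / (q * q * x) * q ^ (S (S N)) + / q * x * q ^ N).
    - intros N. rewrite Rminus_0_r. unfold Rminus. eapply Rle_trans; [apply Rabs_triang|]. rewrite Rabs_Ropp.
      apply Rplus_le_compat.
      + eapply Rle_trans; [apply hh_large; apply Rmult_lt_0_compat; auto; apply Qpow_pos; auto|].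
        right. rewrite Qpow by auto. field. repeat split; try lra. apply pow_nonzero; lra.
      + eapply Rle_trans; [apply hh_small; apply Rmult_lt_0_compat; auto; apply pow_lt; lra|].
        right. field. lra.
    - replace (Finite 0) with (Finite (/ (q * q * x) * 0 + / q * x * 0)) by (f_equal; ring).
      apply is_lim_seq_plus'; apply is_lim_seq_mult'; try apply is_lim_seq_const.
      + apply (is_lim_seq_ext (fun n => q ^ (n + 2))); [intros; f_equal; lia|].
        apply (is_lim_seq_incr_n (fun n => q ^ n) 2). apply is_lim_seq_geom. rewrite Rabs_right; lra.
      + apply is_lim_seq_geom. rewrite Rabs_right; lra. }
  assert (H4 := is_lim_seq_minus' _ _ _ _ H2 H1).
  assert (H5 : is_lim_seq (fun N => Ssum (aF q (Q q * x)) (seq 0 (S N)) - Ssum (aF q x) (seq 0 (S N))) 0).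
  { apply is_lim_seq_ext with (2 := H3). intros N. rewrite FF_period_partial; auto. }
  pose proof (is_lim_seq_unique _ _ H4). pose proof (is_lim_seq_unique _ _ H5).
  rewrite H in H0. injection H0. lra.
Qed.


Lemma aF_derive x0 j : 0 < x0 -> ex_derive (fun x => aF q x j) x0.
Proof.
  intros Hx. pose proof (cc_pos q hq0 hq1). pose proof (Qpow_pos q hq0 hq1 (S j)).
  assert (0 < q ^ j) by (apply pow_lt; lra).
  unfold aF, hh. auto_derive. repeat split; apply Rgt_not_eq; repeat apply Rmult_lt_0_compat; auto.
  all: try lra; try (apply Rinv_0_lt_compat; lra); try (apply Qpow_pos; auto).
Qed.

Lemma PN_cont N x0 : 0 < x0 -> continuous (fun x => Ssum (aF q x) (seq 0 N)) x0.
Proof.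
  intros Hx. apply (ex_derive_continuous (K := R_AbsRing) (V := R_NormedModule)).
  apply (ex_derive_Ssum (fun j x => aF q x j)). intros j. apply aF_derive; auto.
Qed.

Lemma FF_cont x0 : 0 < x0 -> continuous (FF q) x0.
Proof.
  intros Hx0. apply filterlim_locally. intros eps.
  set (Kx := / q * (2 / x0 + 2 * x0)).
  assert (HK : 0 < Kx).
  { unfold Kx. apply Rmult_lt_0_compat; [apply Rinv_0_lt_compat; lra|].
    assert (0 < 2 / x0) by (apply Rdiv_lt_0_compat; lra). lra. }
  assert (He3 : 0 < eps / 3) by (pose proof (cond_pos eps); lra).
  destruct (pow_lt_1_zero q ltac:(rewrite Rabs_right; lra) (eps / 3 / Kx) ltac:(apply Rdiv_lt_0_compat; auto))
    as [N HN].
  specialize (HN N (le_n _)). rewrite Rabs_right in HN by (apply Rle_ge, pow_le; lra).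
  assert (HqN : q ^ N * Kx < eps / 3).
  { apply (Rmult_lt_compat_r Kx) in HN; auto. unfold Rdiv in HN at 1.
    rewrite Rmult_assoc, Rinv_l, Rmult_1_r in HN by lra. auto. }
  assert (Htail : forall x, x0 / 2 <= x <= 2 * x0 -> Rabs (FF q x - Ssum (aF q x) (seq 0 N)) < eps / 3).
  { intros x Hx. destruct (FF_spec q hq0 hq1 x ltac:(lra)) as [_ Hb].
    eapply Rle_lt_trans; [apply Hb|]. eapply Rle_lt_trans; [|exact HqN].
    unfold Kx. assert (0 <= q ^ N) by (apply pow_le; lra).
    assert (q ^ N / x <= q ^ N * (2 / x0)).
    { unfold Rdiv. apply Rmult_le_compat_l; auto.
      replace (2 * / x0) with (/ (x0 / 2)) by (field; lra). apply Rinv_le_contravar; lra. }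
    assert (x * q ^ N <= q ^ N * (2 * x0)) by nra.
    replace (q ^ N * (/ q * (2 / x0 + 2 * x0))) with (/ q * (q ^ N * (2 / x0) + q ^ N * (2 * x0))) by ring.
    apply Rmult_le_compat_l; [left; apply Rinv_0_lt_compat; lra| lra]. }
  pose proof (proj1 (filterlim_locally _ _) (PN_cont N x0 Hx0) (mkposreal _ He3)) as HP.
  assert (Hx2 : 0 < x0 / 2) by lra.
  pose proof (locally_ball x0 (mkposreal _ Hx2)) as HB.
  eapply filter_imp; [|apply filter_and; [exact HP| exact HB]].
  intros x [H1 H2]. rewrite ballR in *. simpl in H1, H2.
  apply Rabs_lt_between' in H2.
  assert (T1 := Htail x ltac:(lra)). assert (T2 := Htail x0 ltac:(lra)).
  replace (FF q x - FF q x0) with ((FF q x - Ssum (aF q x) (seq 0 N)) + (Ssum (aF q x) (seq 0 N) - Ssum (aF q x0) (seq 0 N))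
                                  - (FF q x0 - Ssum (aF q x0) (seq 0 N))) by ring.
  eapply Rle_lt_trans; [apply Rabs_triang|]. rewrite Rabs_Ropp.
  eapply Rle_lt_trans; [apply Rplus_le_compat_r; apply Rabs_triang|]. lra.
Qed.

End S6.

Lemma gen_period (g : R -> R) (Q0 q : R) (HqQ : q * Q0 = 1) x N :
  Ssum (fun j => g (Q0 * x * q ^ j) + g (Q0 * x * Q0 ^ S j)) (seq 0 (S N)) -
  Ssum (fun j => g (x * q ^ j) + g (x * Q0 ^ S j)) (seq 0 (S N)) =
  g (x * Q0 ^ S (S N)) - g (x * q ^ N).
Proof.
  induction N.
  - unfold Ssum. simpl.
    replace (Q0 * x * 1) with (x * (Q0 * 1)) by ring.
    replace (Q0 * x * (Q0 * 1)) with (x * (Q0 * (Q0 * 1))) by ring.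
    replace (x * 1) with x by ring. ring.
  - rewrite (Ssum_seq_S (fun j => g (Q0 * x * q ^ j) + g (Q0 * x * Q0 ^ S j))),
            (Ssum_seq_S (fun j => g (x * q ^ j) + g (x * Q0 ^ S j))).
    match goal with |- ?A + ?B - (?C + ?D) = _ => replace (A + B - (C + D)) with ((A - C) + B - D) by ring end.
    rewrite IHN. rewrite Nat.add_0_l.
    replace (Q0 * x * q ^ S N) with (x * q ^ N).
    2:{ simpl. transitivity (x * q ^ N * (q * Q0)); [rewrite HqQ; ring| ring]. }
    replace (Q0 * x * Q0 ^ S (S N)) with (x * Q0 ^ S (S (S N))) by (simpl; ring).
    ring.
Qed.

Lemma is_RInt_lin (f g : R -> R) a b If Ig k1 k2 :
  is_RInt f a b If -> is_RInt g a b Ig -> is_RInt (fun x => k1 * f x - k2 * g x) a b (k1 * If - k2 * Ig).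
Proof.
  intros Hf Hg.
  pose proof (is_RInt_minus _ _ _ _ _ _ (is_RInt_scal _ _ _ k1 _ Hf) (is_RInt_scal _ _ _ k2 _ Hg)) as H.
  exact H.
Qed.

Section S7.
Variable q : R.
Hypothesis hq0 : 0 < q.
Hypothesis hq1 : q < 1.

Definition LL := ln (Q q).
Definition EE u := exp (u * LL).

Lemma LL_pos : 0 < LL.
Proof. unfold LL. rewrite <- ln_1. apply ln_increasing; [lra| apply Q_gt1; auto]. Qed.

Lemma EE_pos u : 0 < EE u. Proof. apply exp_pos. Qed.
Lemma EE_0 : EE 0 = 1. Proof. unfold EE. rewrite Rmult_0_l, exp_0. reflexivity. Qed.
Lemma EE_1 : EE 1 = Q q.
Proof. unfold EE, LL. rewrite Rmult_1_l, exp_ln; auto. pose proof (Q_gt1 q hq0 hq1). lra. Qed.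

Definition dterm r u := - LL * (hh q (EE u * r) + / cc q * (exp (- (EE u * r)) - exp (- (Q q * (EE u * r))))).

Lemma D1_derive r u : 0 < r -> is_derive (fun u => D1 q (EE u * r)) u (dterm r u).
Proof.
  intros Hr. pose proof (cc_pos q hq0 hq1). pose proof (EE_pos u).
  unfold D1, dterm, hh, EE. auto_derive.
  all: match goal with
       | |- _ <> _ => apply Rgt_not_eq; apply Rmult_lt_0_compat; auto; apply Rmult_lt_0_compat; auto; apply exp_pos
       | |- _ = _ => rewrite (Q_cc q hq0); field; repeat split; try lra; apply Rgt_not_eq, exp_pos
       | _ => idtac
       end.
Qed.


Lemma D1_near0 t : 0 < t -> Rabs (D1 q t - 1) <= (1 + Q q ^ 2) * t / cc q.
Proof.
  intros Ht. pose proof (cc_pos q hq0 hq1) as Hc. pose proof (Q_gt1 q hq0 hq1) as HQ.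
  pose proof (expn_lb t). pose proof (expn_ub2 t ltac:(lra)).
  pose proof (expn_lb (Q q * t)). pose proof (expn_ub2 (Q q * t) ltac:(nra)).
  set (r1 := exp (- t) - (1 - t)). set (r2 := exp (- (Q q * t)) - (1 - Q q * t)).
  assert (E : D1 q t - 1 = (r1 - r2) / (cc q * t)).
  { unfold D1, r1, r2. rewrite (Q_cc q hq0). field. split; lra. }
  rewrite E. unfold Rdiv. rewrite Rabs_mult, Rabs_inv, (Rabs_right (cc q * t)) by nra.
  apply Rle_trans with ((1 + Q q ^ 2) * t ^ 2 * / (cc q * t)).
  { apply Rmult_le_compat_r; [left; apply Rinv_0_lt_compat; nra|].
    apply Rabs_le. unfold r1, r2 in *. split; simpl in *; nra. }
  right. field. split; lra.
Qed.

Lemma D1_large t : 0 < t -> Rabs (D1 q t) <= 2 / (cc q * t).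
Proof.
  intros Ht. pose proof (cc_pos q hq0 hq1) as Hc. pose proof (Q_gt1 q hq0 hq1) as HQ.
  unfold D1. unfold Rdiv. rewrite Rabs_mult, Rabs_inv, (Rabs_right (cc q * t)) by nra.
  apply Rmult_le_compat_r; [left; apply Rinv_0_lt_compat; nra|].
  assert (exp (- t) <= 1) by (rewrite <- exp_0; apply exp_le; lra).
  assert (exp (- (Q q * t)) <= 1) by (rewrite <- exp_0; apply exp_le; nra).
  pose proof (exp_pos (- t)). pose proof (exp_pos (- (Q q * t))).
  apply Rabs_le. lra.
Qed.

Definition DS N u := Ssum (fun j => dterm (q ^ j) u + dterm (Q q ^ S j) u) (seq 0 (S N)).
Definition Dsum N u := Ssum (fun j => D1 q (EE u * q ^ j) + D1 q (EE u * Q q ^ S j)) (seq 0 (S N)).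
Definition Phi N x := exp (- (x * q ^ N)) - exp (- (x * Q q ^ S (S N))).

Lemma Dsum_derive N u : is_derive (Dsum N) u (DS N u).
Proof.
  unfold Dsum, DS.
  apply (is_derive_Ssum (fun j u => D1 q (EE u * q ^ j) + D1 q (EE u * Q q ^ S j))
                        (fun j u => dterm (q ^ j) u + dterm (Q q ^ S j) u)).
  intros j. apply (is_derive_plus (fun u => D1 q (EE u * q ^ j)) (fun u => D1 q (EE u * Q q ^ S j))).
  - apply D1_derive. apply pow_lt; lra.
  - apply D1_derive. apply Qpow_pos; auto.
Qed.

Lemma dterm_ex_derive r u : 0 < r -> ex_derive (dterm r) u.
Proof.
  intros Hr. pose proof (cc_pos q hq0 hq1).
  unfold dterm, hh, EE. auto_derive.
  apply Rgt_not_eq; apply Rmult_lt_0_compat; auto; apply Rmult_lt_0_compat; auto; apply exp_pos.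
Qed.

Lemma DS_cont N u : continuous (DS N) u.
Proof.
  apply (ex_derive_continuous (K := R_AbsRing) (V := R_NormedModule)).
  unfold DS. apply (ex_derive_Ssum (fun j u => dterm (q ^ j) u + dterm (Q q ^ S j) u)).
  intros j. apply (ex_derive_plus (dterm (q ^ j)) (dterm (Q q ^ S j))).
  - apply dterm_ex_derive. apply pow_lt; lra.
  - apply dterm_ex_derive. apply Qpow_pos; auto.
Qed.

Lemma psi_tel N x :
  Ssum (fun j => (exp (- (x * q ^ j)) - exp (- (Q q * (x * q ^ j))))
               + (exp (- (x * Q q ^ S j)) - exp (- (Q q * (x * Q q ^ S j))))) (seq 0 (S N)) = Phi N x.
Proof.
  pose proof (qQ q hq0) as HqQ. unfold Phi. induction N.
  - unfold Ssum. simpl.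
    replace (Q q * (x * 1)) with (x * (Q q * 1)) by ring.
    replace (Q q * (x * (Q q * 1))) with (x * (Q q * (Q q * 1))) by ring. ring.
  - rewrite Ssum_seq_S, IHN, Nat.add_0_l.
    replace (Q q * (x * q ^ S N)) with (x * q ^ N).
    2:{ simpl. transitivity (x * q ^ N * (q * Q q)); [rewrite HqQ; ring| ring]. }
    replace (Q q * (x * Q q ^ S (S N))) with (x * Q q ^ S (S (S N))) by (simpl; ring).
    ring.
Qed.

Lemma integrand_eq N u :
  Ssum (aF q (EE u)) (seq 0 (S N)) = - / LL * DS N u - / cc q * Phi N (EE u).
Proof.
  pose proof LL_pos. pose proof (cc_pos q hq0 hq1).
  unfold DS. rewrite <- psi_tel.
  set (ps := fun j => (exp (- (EE u * q ^ j)) - exp (- (Q q * (EE u * q ^ j))))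
               + (exp (- (EE u * Q q ^ S j)) - exp (- (Q q * (EE u * Q q ^ S j))))).
  rewrite (Ssum_ext (fun j => dterm (q ^ j) u + dterm (Q q ^ S j) u) (fun j => - LL * (aF q (EE u) j + / cc q * ps j)))
    by (intros; unfold aF, ps, dterm; ring).
  rewrite Ssum_scal, Ssum_plus, Ssum_scal. field. split; lra.
Qed.

Lemma Dsum_diff N : Dsum N 1 - Dsum N 0 = D1 q (Q q ^ S (S N)) - D1 q (q ^ N).
Proof.
  unfold Dsum. rewrite EE_1, EE_0.
  pose proof (gen_period (D1 q) (Q q) q (qQ q hq0) 1 N) as G.
  rewrite !Rmult_1_l, Rmult_1_r in G.
  rewrite <- G. reflexivity.
Qed.

Lemma EE_cont u : continuous EE u.
Proof. apply (ex_derive_continuous (K := R_AbsRing) (V := R_NormedModule)). unfold EE. auto_derive. auto. Qed.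

Lemma Phi_cont N u : continuous (fun u => Phi N (EE u)) u.
Proof. apply (ex_derive_continuous (K := R_AbsRing) (V := R_NormedModule)). unfold Phi, EE. auto_derive. auto. Qed.

Lemma SN_cont N u : continuous (fun u => Ssum (aF q (EE u)) (seq 0 N)) u.
Proof.
  apply (continuous_comp EE (fun x => Ssum (aF q x) (seq 0 N))); [apply EE_cont|].
  apply PN_cont; auto. apply EE_pos.
Qed.

Lemma IN_value N :
  RInt (fun u => Ssum (aF q (EE u)) (seq 0 (S N))) 0 1 =
  - / LL * (D1 q (Q q ^ S (S N)) - D1 q (q ^ N)) - / cc q * RInt (fun u => Phi N (EE u)) 0 1.
Proof.
  apply is_RInt_unique.
  apply (is_RInt_ext (fun u => - / LL * DS N u - / cc q * Phi N (EE u))).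
  { intros x _. rewrite integrand_eq. reflexivity. }
  rewrite <- Dsum_diff.
  apply is_RInt_lin.
  - pose proof (is_RInt_derive (Dsum N) (DS N) 0 1 (fun x _ => Dsum_derive N x) (fun x _ => DS_cont N x)) as H.
    exact H.
  - assert (Hex : ex_RInt (fun u => Phi N (EE u)) 0 1).
    { apply (ex_RInt_continuous (V := R_CompleteNormedModule)). intros z _. apply Phi_cont. }
    pose proof (RInt_correct _ _ _ Hex) as H. exact H.
Qed.


Lemma EE_bounds u : 0 <= u <= 1 -> 1 <= EE u <= Q q.
Proof.
  intros Hu. pose proof LL_pos. split.
  - unfold EE. rewrite <- exp_0. apply exp_le. nra.
  - rewrite <- EE_1. unfold EE. apply exp_le. nra.
Qed.

Lemma RPhi_bound N : Rabs (RInt (fun u => Phi N (EE u)) 0 1 - 1) <= Q q * q ^ N + q ^ S (S N).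
Proof.
  assert (Hex : ex_RInt (fun u => Phi N (EE u)) 0 1).
  { apply (ex_RInt_continuous (V := R_CompleteNormedModule)). intros z _. apply Phi_cont. }
  pose proof (RInt_correct _ _ _ Hex) as H1.
  assert (H2 : is_RInt (fun _ : R => 1) 0 1 1).
  { pose proof (is_RInt_const 0 1 (1:R)) as H. change (scal (1 - 0) (1:R)) with ((1 - 0) * 1) in H.
    replace ((1 - 0) * 1) with 1 in H by ring. exact H. }
  pose proof (is_RInt_lin _ _ 0 1 _ _ 1 1 H1 H2) as H3.
  assert (Hex3 : ex_RInt (fun x => 1 * Phi N (EE x) - 1 * 1) 0 1) by (eexists; exact H3).
  assert (E3 : RInt (fun x => 1 * Phi N (EE x) - 1 * 1) 0 1 = 1 * RInt (fun u => Phi N (EE u)) 0 1 - 1 * 1)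
    by exact (is_RInt_unique _ _ _ _ H3).
  assert (E4 : RInt (fun u => Phi N (EE u)) 0 1 - 1 = RInt (fun x => 1 * Phi N (EE x) - 1 * 1) 0 1)
    by (rewrite E3; ring).
  rewrite E4.
  replace (Q q * q ^ N + q ^ S (S N)) with ((1 - 0) * (Q q * q ^ N + q ^ S (S N))) by ring.
  apply abs_RInt_le_const; [lra| exact Hex3|].
  intros u Hu. destruct (EE_bounds u Hu) as [Hx1 Hx2]. set (x := EE u) in *.
  unfold Phi. rewrite !Rmult_1_l.
  assert (HqN : 0 <= q ^ N) by (apply pow_le; lra).
  pose proof (expn_lb (x * q ^ N)).
  assert (exp (- (x * q ^ N)) <= 1) by (rewrite <- exp_0; apply exp_le; nra).
  assert (HQp := Qpow_pos q hq0 hq1 (S (S N))).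
  assert (e2 : exp (- (x * Q q ^ S (S N))) <= q ^ S (S N)).
  { eapply Rle_trans; [apply expn_ub3; nra|]. rewrite Qpow by lra.
    rewrite Rinv_mult, Rinv_inv. assert (0 < q ^ S (S N)) by (apply pow_lt; lra).
    assert (/ x <= 1) by (rewrite <- Rinv_1; apply Rinv_le_contravar; lra).
    assert (0 < / x) by (apply Rinv_0_lt_compat; lra). nra. }
  pose proof (exp_pos (- (x * Q q ^ S (S N)))).
  apply Rabs_le. split; nra.
Qed.

Lemma FFE_cont u : continuous (fun u => FF q (EE u)) u.
Proof.
  apply (continuous_comp EE (FF q)); [apply EE_cont|]. apply FF_cont; auto. apply EE_pos.
Qed.

Lemma RFF_bound N :
  Rabs (RInt (fun u => FF q (EE u)) 0 1 - RInt (fun u => Ssum (aF q (EE u)) (seq 0 (S N))) 0 1)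
    <= / q * ((1 + Q q) * q ^ S N).
Proof.
  assert (Hex1 : ex_RInt (fun u => FF q (EE u)) 0 1).
  { apply (ex_RInt_continuous (V := R_CompleteNormedModule)). intros z _. apply FFE_cont. }
  assert (Hex2 : ex_RInt (fun u => Ssum (aF q (EE u)) (seq 0 (S N))) 0 1).
  { apply (ex_RInt_continuous (V := R_CompleteNormedModule)). intros z _. apply SN_cont. }
  pose proof (RInt_correct _ _ _ Hex1) as H1. pose proof (RInt_correct _ _ _ Hex2) as H2.
  pose proof (is_RInt_lin _ _ 0 1 _ _ 1 1 H1 H2) as H3.
  assert (Hex3 : ex_RInt (fun x => 1 * FF q (EE x) - 1 * Ssum (aF q (EE x)) (seq 0 (S N))) 0 1)
    by (eexists; exact H3).
  assert (E3 : RInt (fun x => 1 * FF q (EE x) - 1 * Ssum (aF q (EE x)) (seq 0 (S N))) 0 1 =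
     1 * RInt (fun u => FF q (EE u)) 0 1 - 1 * RInt (fun u => Ssum (aF q (EE u)) (seq 0 (S N))) 0 1)
    by exact (is_RInt_unique _ _ _ _ H3).
  assert (E4 : RInt (fun u => FF q (EE u)) 0 1 - RInt (fun u => Ssum (aF q (EE u)) (seq 0 (S N))) 0 1 =
     RInt (fun x => 1 * FF q (EE x) - 1 * Ssum (aF q (EE x)) (seq 0 (S N))) 0 1) by (rewrite E3; ring).
  rewrite E4.
  replace (/ q * ((1 + Q q) * q ^ S N)) with ((1 - 0) * (/ q * ((1 + Q q) * q ^ S N))) by ring.
  apply abs_RInt_le_const; [lra| exact Hex3|].
  intros u Hu. destruct (EE_bounds u Hu) as [Hx1 Hx2].
  destruct (FF_spec q hq0 hq1 (EE u) ltac:(lra)) as [_ Hb].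
  rewrite !Rmult_1_l. eapply Rle_trans; [apply Hb|].
  apply Rmult_le_compat_l; [left; apply Rinv_0_lt_compat; lra|].
  set (x := EE u) in *. assert (0 <= q ^ S N) by (apply pow_le; lra).
  assert (q ^ S N / x <= q ^ S N).
  { unfold Rdiv. assert (/ x <= 1) by (rewrite <- Rinv_1; apply Rinv_le_contravar; lra).
    assert (0 < / x) by (apply Rinv_0_lt_compat; lra). nra. }
  nra.
Qed.

Lemma RInt_FF : RInt (fun u => FF q (EE u)) 0 1 = / LL - / cc q.
Proof.
  pose proof LL_pos as HL. pose proof (cc_pos q hq0 hq1) as Hc. pose proof (Q_gt1 q hq0 hq1) as HQ.
  set (I := fun N => RInt (fun u => Ssum (aF q (EE u)) (seq 0 (S N))) 0 1).
  assert (H1 : is_lim_seq I (RInt (fun u => FF q (EE u)) 0 1)).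
  { apply lim_by_bound with (fun N => (/ q * (1 + Q q) * q) * q ^ N).
    - intros N. unfold I. rewrite Rabs_minus_sym. eapply Rle_trans; [apply RFF_bound|]. right. simpl. ring.
    - apply lim_geom_scal; auto. }
  assert (H2 : is_lim_seq I (/ LL - / cc q)).
  { apply is_lim_seq_ext with (fun N => - / LL * (D1 q (Q q ^ S (S N)) - D1 q (q ^ N))
                                       - / cc q * RInt (fun u => Phi N (EE u)) 0 1).
    { intros N. unfold I. rewrite IN_value. reflexivity. }
    replace (/ LL - / cc q) with (- / LL * (0 - 1) - / cc q * 1) by ring.
    apply is_lim_seq_minus'; apply is_lim_seq_mult'; try apply is_lim_seq_const.
    - apply is_lim_seq_minus'.
      + apply lim_by_bound with (fun N => (2 / cc q * (q * q)) * q ^ N).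
        * intros N. rewrite Rminus_0_r. eapply Rle_trans; [apply D1_large; apply Qpow_pos; auto|].
          right. rewrite Qpow by lra. simpl. field. repeat split; try lra. apply pow_nonzero; lra.
        * apply lim_geom_scal; auto.
      + apply lim_by_bound with (fun N => ((1 + Q q ^ 2) / cc q) * q ^ N).
        * intros N. eapply Rle_trans; [apply D1_near0; apply pow_lt; lra|]. right. field. lra.
        * apply lim_geom_scal; auto.
    - apply lim_by_bound with (fun N => (Q q + q * q) * q ^ N).
      + intros N. eapply Rle_trans; [apply RPhi_bound|]. right. simpl. ring.
      + apply lim_geom_scal; auto. }
  pose proof (is_lim_seq_unique _ _ H1). pose proof (is_lim_seq_unique _ _ H2).
  rewrite H in H0. injection H0. auto.
Qed.

End S7.

Lemma lim_inv_Sn (K : R) : is_lim_seq (fun n => K / INR (S n)) 0.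
Proof.
  assert (H : is_lim_seq (fun n => / INR (S n)) 0).
  { pose proof (is_lim_seq_inv _ _ (proj1 (is_lim_seq_incr_1 INR p_infty) is_lim_seq_INR)) as H.
    simpl in H. apply H. discriminate. }
  replace (Finite 0) with (Finite (K * 0)) by (f_equal; ring).
  apply is_lim_seq_mult'; [apply is_lim_seq_const| exact H].
Qed.

Theorem mainTheorem6 (q : R) (hq0 : 0 < q) (hq1 : q < 1) :
  let p := 1 - q in
  let Q := 1 / q in
  let L := ln Q in
  exists varpi : R -> R,
    (forall x, continuous varpi x) /\
    (forall x, varpi (x + 1) = varpi x) /\
    RInt varpi 0 1 = 0 /\
    is_lim_seq
      (fun n : nat =>
         (EP p q n - INR n * (1 / L - q / p + varpi (ln (INR n) / L))) / INR n)
      0.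
Proof.
  cbv zeta.
  set (C := 1 / ln (1 / q) - q / (1 - q)).
  pose proof (LL_pos q hq0 hq1) as HL. pose proof (cc_pos q hq0 hq1) as Hc.
  change (ln (1 / q)) with (LL q) in *.
  exists (fun u => FF q (EE q u) - C).
  split; [|split; [|split]].
  - intros x. apply (continuous_minus (fun u => FF q (EE q u)) (fun _ => C)).
    + apply FFE_cont; auto.
    + apply continuous_const.
  - intros x. f_equal. unfold EE.
    replace ((x + 1) * LL q) with (x * LL q + LL q) by ring. rewrite exp_plus.
    unfold LL. rewrite exp_ln by (pose proof (Q_gt1 q hq0 hq1); lra).
    rewrite Rmult_comm. fold (LL q). apply FF_period; auto. apply exp_pos.
  - apply is_RInt_unique.
    assert (Hex1 : ex_RInt (fun u => FF q (EE q u)) 0 1).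
    { apply (ex_RInt_continuous (V := R_CompleteNormedModule)). intros z _. apply FFE_cont; auto. }
    pose proof (RInt_correct _ _ _ Hex1) as H1.
    pose proof (is_RInt_const 0 1 C) as H2. change (scal (1 - 0) C) with ((1 - 0) * C) in H2.
    pose proof (is_RInt_lin _ _ 0 1 _ _ 1 1 H1 H2) as H3.
    apply (is_RInt_ext (fun x => 1 * FF q (EE q x) - 1 * C)); [intros x _; rewrite !Rmult_1_l; reflexivity|].
    assert (Z : 1 * RInt (fun u => FF q (EE q u)) 0 1 - 1 * ((1 - 0) * C) = 0).
    { rewrite (RInt_FF q hq0 hq1). unfold C, cc, Rdiv. field. repeat split; lra. }
    rewrite Z in H3. exact H3.
  - apply is_lim_seq_incr_1.
    apply lim_by_bound with (fun n => (3 * K1 q + / q * / q) / INR (S n)); [|apply lim_inv_Sn].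
    intros n. rewrite Rminus_0_r.
    assert (HN : 1 <= INR (S n)) by (apply (le_INR 1); lia).
    assert (E : (EP (1 - q) q (S n) - INR (S n) * (C + (FF q (EE q (ln (INR (S n)) / LL q)) - C))) / INR (S n)
                = EP (1 - q) q (S n) / INR (S n) - FF q (INR (S n))).
    { unfold EE. replace (ln (INR (S n)) / LL q * LL q) with (ln (INR (S n))) by (field; lra).
      rewrite exp_ln by lra. field. lra. }
    rewrite E. eapply Rle_trans; [apply EP_bound; auto; lia|].
    assert (exp (- (q * INR (S n))) <= / (q * INR (S n))) by (apply expn_ub3; nra).
    assert (0 < / q) by (apply Rinv_0_lt_compat; lra).
    replace ((3 * K1 q + / q * / q) / INR (S n)) with (3 * K1 q / INR (S n) + / q * / (q * INR (S n)))
      by (field; split; lra).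
    apply Rplus_le_compat_l. apply Rmult_le_compat_l; lra.
Qed.
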